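(* Let $d\ge 1$, $p>1$ and $s\in(0,1)$ with $sp<d$, and let $\mathcal{C}=C(d,p)\,\frac{s(1-s)}{(d-sp)^{p-1}}$ be the fractional Sobolev constant described in the context. Then for every $u\in W^{s,p}(\mathbb{R}^d)$ with $\int_{\mathbb{R}^d}|u(x)|^p\,dx=1$, \[ \int_{\mathbb{R}^d}|u(x)|^p\log|u(x)|\,dx\le \frac{d}{sp^2}\log\left(\mathcal{C}\int_{\mathbb{R}^d}\int_{\mathbb{R}^d}\frac{|u(x)-u(y)|^p}{|x-y|^{d+sp}}\,dx\,dy\right). \]
   Context: $W^{s,p}(\mathbb{R}^d)$ is the completion of $C_c^\infty(\mathbb{R}^d)$ under the norm $(\|u\|_{L^p}^p+[u]_{W^{s,p}}^p)^{1/p}$, where $[u]_{W^{s,p}(\mathbb{R}^d)}^p=\int_{\mathbb{R}^d}\int_{\mathbb{R}^d}\frac{|u(x)-u(y)|^p}{|x-y|^{d+sp}}dx\,dy$. $C(d,p)>0$ is a constant depending only on $d$ and $p$ such that, with $\mathcal{C}=C(d,p)\frac{s(1-s)}{(d-sp)^{p-1}}$ and $p^*_s=\frac{dp}{d-sp}$, the fractional Sobolev inequality $\|u\|_{L^{p^*_s}(\mathbb{R}^d)}\le \mathcal{C}^{1/p}[u]_{W^{s,p}(\mathbb{R}^d)}$ holds for all $s\in(0,1)$ with $sp<d$ and all $u\in W^{s,p}(\mathbb{R}^d)$ (such a constant exists by a theorem of Maz'ya and Shaposhnikova). *)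

(* Defs.v *)
From HB Require Import structures.
From mathcomp Require Import all_boot all_order all_algebra.
From mathcomp Require Import all_classical all_reals all_analysis.
Set Implicit Arguments. Unset Strict Implicit. Unset Printing Implicit Defensive.
Import Order.TTheory GRing.Theory Num.Def Num.Theory.
Import numFieldNormedType.Exports.
Local Open Scope classical_set_scope.
Local Open Scope ring_scope.

(* R^d, as row vectors, equipped with its Borel sigma-algebra
   (generated by the open sets of the product = Euclidean topology). *)
Definition Rd (R : realType) (d : nat) :=
  g_sigma_algebraType (@open 'rV[R]_d).

Definition enorm (R : realType) (d : nat) (x : 'rV[R]_d) : R :=
  Num.sqrt (\sum_(i < d) x ord0 i ^+ 2).

Definition box (R : realType) (d : nat) (a b : 'rV[R]_d) : set (Rd R d) :=
  [set x : 'rV[R]_d | forall i : 'I_d, a ord0 i <= x ord0 i <= b ord0 i].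

(* mu is the Lebesgue measure on the Borel sets of R^d: the (unique)
   Borel measure giving every box its volume. *)
Definition is_lebesgue (R : realType) (d : nat)
  (mu : {measure set (Rd R d) -> \bar R}) : Prop :=
  forall a b : 'rV[R]_d, (forall i, a ord0 i <= b ord0 i) ->
    mu (box a b) = (\prod_(i < d) (b ord0 i - a ord0 i))%:E.

Definition gagliardo_p (R : realType) (d : nat)
  (mu : {measure set (Rd R d) -> \bar R}) (s p : R) (u : Rd R d -> R) : \bar R :=
  (\int[mu]_x \int[mu]_y
     ((powR `|u x - u y| p) /
        powR (enorm ((x : 'rV[R]_d) - (y : 'rV[R]_d))) (d%:R + s * p))%:E)%E.

Definition gagliardo (R : realType) (d : nat)
  (mu : {measure set (Rd R d) -> \bar R}) (s p : R) (u : Rd R d -> R) : \bar R :=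
  poweR (gagliardo_p mu s p u) p^-1.

(* Membership in W^{s,p}(R^d): (a Borel representative of) a function with
   finite L^p norm and finite Gagliardo seminorm. *)
Definition in_Wsp (R : realType) (d : nat)
  (mu : {measure set (Rd R d) -> \bar R}) (s p : R) (u : Rd R d -> R) : Prop :=
  [/\ measurable_fun setT u,
      ('N[mu]_(p%:E)[EFin \o u] < +oo)%E &
      (gagliardo_p mu s p u < +oo)%E].

Definition sob_const (R : realType) (d : nat) (Cdp s p : R) : R :=
  Cdp * (s * (1 - s)) / powR (d%:R - s * p) (p - 1).

Definition pstar (R : realType) (d : nat) (s p : R) : R := d%:R * p / (d%:R - s * p).

(* The standing assumption on C(d,p): the fractional Sobolev inequality
   holds with constant sob_const for all s in (0,1) with sp<d and all u. *)
Definition sobolev_ineq (R : realType) (d : nat)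
  (mu : {measure set (Rd R d) -> \bar R}) (Cdp p : R) : Prop :=
  forall s : R, 0 < s < 1 -> s * p < d%:R ->
  forall u : Rd R d -> R, in_Wsp mu s p u ->
    ('N[mu]_((pstar d s p)%:E)[EFin \o u] <=
       (powR (sob_const d Cdp s p) p^-1)%:E * gagliardo mu s p u)%E.

(* Main.v *)
Require Import Defs.
From HB Require Import structures.
From mathcomp Require Import all_boot all_order all_algebra.
From mathcomp Require Import all_classical all_reals all_analysis.
From mathcomp Require Import measurable_realfun ring lra.
Import Order.TTheory GRing.Theory Num.Def Num.Theory.
Import numFieldNormedType.Exports.
Local Open Scope classical_set_scope.
Local Open Scope ring_scope.

Lemma le_integral_m d (T : measurableType d) (R : realType)
  (mu : {measure set T -> \bar R}) (f g : T -> \bar R) :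
  measurable_fun [set: T] f -> mu.-integrable [set: T] g -> (forall x, (f x <= g x)%E) ->
  (\int[mu]_x f x <= \int[mu]_x g x)%E.
Proof.
move=> mf intg fg; rewrite integralE [leRHS]integralE; apply: leeB.
- apply: ge0_le_integral => //.
  + exact: measurable_funepos.
  + by move/integrableP : intg => [+ _]; exact: measurable_funepos.
  + by move=> x _; apply: (@funepos_le _ _ [set: T]) => [y _|]; [exact: fg|rewrite in_setT].
- apply: ge0_le_integral => //.
  + by move/integrableP : intg => [+ _]; exact: measurable_funeneg.
  + exact: measurable_funeneg.
  + by move=> x _; apply: (@funeneg_le _ _ [set: T]) => [y _|]; [exact: fg|rewrite in_setT].
Qed.

Lemma ln_le_sub1 (R : realType) (x : R) : 0 < x -> ln x <= x - 1.
Proof.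
move=> x0; have := @le_ln1Dx R (x - 1); rewrite addrCA subrr addr0; apply.
by rewrite ltrBrDl subrr.
Qed.

Lemma pointwise (R : realType) (a p q t : R) : 0 <= a -> 0 < p -> 0 < q -> 0 < t ->
  powR a p * ln a <=
  (powR a p * ln t + powR a (p + q) / t - powR a p) / q.
Proof.
move=> a0 p0 q0 t0.
have [->|ap] := eqVneq a 0.
  rewrite powR0 ?gt_eqF // powR0 ?gt_eqF ?addr_gt0 //.
  by rewrite !mul0r add0r subrr mul0r.
have a0' : 0 < a by rewrite lt_neqAle eq_sym ap.
rewrite powRD ?ap ?implybT //.
rewrite ler_pdivlMr //.
have P0 : 0 < powR a p by rewrite powR_gt0.
have Q0 : 0 < powR a q by rewrite powR_gt0.
have := @ln_le_sub1 R _ (divr_gt0 Q0 t0).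
rewrite ln_div ?posrE // ln_powR => h.
have h2 : powR a p * (q * ln a) <= powR a p * (ln t + powR a q / t - 1).
  by rewrite ler_pM2l //; lra.
rewrite mulrAC -mulrA (le_trans h2) //.
by rewrite !mulrDr mulrN1 mulrA le_refl.
Qed.
Lemma integrable_pow d (T : measurableType d) (R : realType)
  (mu : {measure set T -> \bar R}) (u : T -> R) r :
  measurable_fun [set: T] u -> (\int[mu]_x (powR `|u x| r)%:E < +oo)%E ->
  mu.-integrable [set: T] (fun x => (powR `|u x| r)%:E).
Proof.
move=> mu_ fin; apply/integrableP; split.
  apply/measurable_EFinP; apply: (measurableT_comp (measurable_powR _)).
  exact: measurableT_comp.
under eq_integral do rewrite gee0_abs ?lee_fin ?powR_ge0 //.
by [].
Qed.

Lemma meas_pow d (T : measurableType d) (R : realType) (u : T -> R) r :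
  measurable_fun [set: T] u -> measurable_fun [set: T] (fun x => powR `|u x| r).
Proof.
move=> mu_; apply: (measurableT_comp (measurable_powR _)).
exact: measurableT_comp.
Qed.

Lemma eq_ge0 (R : realType) (x : \bar R) : x = 1%E -> (x < +oo)%E.
Proof. by move=> ->; rewrite ltry. Qed.

Theorem theorem1p1 (R : realType) (d : nat) (mu : {measure set (Rd R d) -> \bar R})
  (Cdp p s : R) :
  is_lebesgue mu ->
  (1 <= d)%N -> 1 < p -> 0 < s < 1 -> s * p < d%:R ->
  0 < Cdp -> sobolev_ineq mu Cdp p ->
  forall u : Rd R d -> R, in_Wsp mu s p u ->
  (\int[mu]_x (powR `|u x| p)%:E = 1)%E ->
  (\int[mu]_x (powR `|u x| p * ln `|u x|)%:E <=
     (d%:R / (s * p ^+ 2) * ln (sob_const d Cdp s p * fine (gagliardo_p mu s p u)))%:E)%E.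
Proof.
move=> _ d1 p1 /andP[s0 s1] sp C0 Hsob u Wu Hint1.
have Hs := Hsob s (introT andP (conj s0 s1)) sp u Wu.
case: Wu => mu_ _ Gfin.
set C := sob_const d Cdp s p.
set ps := pstar d s p.
have p0 : 0 < p by exact: (lt_trans ltr01 p1).
have dsp : 0 < d%:R - s * p by rewrite subr_gt0.
have ps0 : 0 < ps by rewrite /ps /pstar divr_gt0 // mulr_gt0 // ltr0n.
set q := ps - p.
have qE : q = s * p ^+ 2 / (d%:R - s * p).
  rewrite /q /ps /pstar; field; exact: lt0r_neq0.
have q0 : 0 < q by rewrite qE divr_gt0 // mulr_gt0 // exprn_gt0.
have Cpos : 0 < C.
  rewrite /C /sob_const divr_gt0 ?powR_gt0 // mulr_gt0 // mulr_gt0 //.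
  by rewrite subr_gt0.
set G := gagliardo_p mu s p u.
have G0 : (0 <= G)%E.
  apply: integral_ge0 => x _; apply: integral_ge0 => y _.
  by rewrite lee_fin divr_ge0 // powR_ge0.
set g := fine G.
have GE : G = g%:E by rewrite /g fineK // ge0_fin_numE.
have g0 : 0 <= g by rewrite /g fine_ge0.
move: Hs; rewrite /gagliardo -/G GE poweR_EFin -EFinM unlock /=.
rewrite -/ps -/C.
set Mi := (\int[mu]_x _)%E => HM.
have Mi0 : (0 <= Mi)%E by apply: integral_ge0 => x _; rewrite lee_fin powR_ge0.
have Mifin : (Mi < +oo)%E.
  apply: (@lty_poweRy _ _ ps^-1); first by rewrite invr_neq0 // gt_eqF.
  by rewrite (le_lt_trans HM) // ltry.
set M := fine Mi.
have ME : Mi = M%:E by rewrite /M fineK // ge0_fin_numE.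
have M0 : 0 <= M by rewrite /M fine_ge0.
move: HM; rewrite ME poweR_EFin lee_fin -powRM ?(ltW Cpos) // => HM.
have HM2 : M <= powR (C * g) (p^-1 * ps).
  rewrite powRrM -[M](@powRr1 _ M) // -[1](@mulVf _ ps) ?gt_eqF // powRrM.
  by apply: (ge0_ler_powR (ltW ps0)) => //; rewrite nnegrE powR_ge0.
have iP := @integrable_pow _ _ _ mu u p mu_ (@eq_ge0 _ _ Hint1).
have iS := @integrable_pow _ _ _ mu u ps mu_ Mifin.
have key : forall t, 0 < t ->
  (\int[mu]_x (powR `|u x| p * ln `|u x|)%:E <= ((ln t - 1) / q + (t^-1 / q) * M)%:E)%E.
  move=> t t0.
  have iG := integrableD measurableT (integrableZl measurableT ((ln t - 1) / q) iP) (integrableZl measurableT (t^-1 / q) iS).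
  have mf : measurable_fun [set: Rd R d] (fun x => (powR `|u x| p * ln `|u x|)%:E).
    apply/measurable_EFinP; apply: measurable_funM; first exact: meas_pow.
    apply: (measurableT_comp (@measurable_ln R)); exact: measurableT_comp.
  apply: (le_trans (@le_integral_m _ _ _ mu _ _ mf iG _)).
    move=> x /=; rewrite -!EFinM -EFinD lee_fin.
    have := @pointwise R `|u x| p q t (normr_ge0 _) p0 q0 t0.
    have -> : p + q = ps by rewrite /q addrC subrK.
    move=> h; apply: (le_trans h); rewrite le_eqVlt; apply/orP; left; apply/eqP.
    field.
    by rewrite !gt_eqF.
  rewrite (integralD measurableT (integrableZl measurableT ((ln t - 1) / q) iP) (integrableZl measurableT (t^-1 / q) iS)).
  rewrite integralZl // integralZl // Hint1 -/Mi ME mule1 -EFinM -EFinD //.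

set e := p^-1 * ps.
have e0 : 0 < e by rewrite /e mulr_gt0 // invr_gt0.
have [gz|gnz] := eqVneq g 0.
  have Mz : M = 0.
    apply/eqP; rewrite eq_le M0 andbT (le_trans HM2) //.
    have -> : C * g = 0 by rewrite gz; ring.
    by rewrite powR0 // gt_eqF.
  apply: (le_trans (key 1 ltr01)).
  have -> : C * g = 0 by rewrite gz; ring.
  rewrite (ln0 (lexx 0)) mulr0 Mz mulr0 addr0 ln1 sub0r lee_fin.
  by rewrite mulN1r oppr_le0 invr_ge0 ltW.
have gpos : 0 < g by rewrite lt_neqAle eq_sym gnz g0.
set t := powR (C * g) e.
have t0 : 0 < t by rewrite powR_gt0 // mulr_gt0.
apply: (le_trans (key t t0)); rewrite lee_fin.
have hMt : t^-1 * M <= 1 by rewrite mulrC ler_pdivrMr // mul1r.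
have E1 : (ln t - 1) / q + t^-1 / q * M = (ln t + (t^-1 * M - 1)) / q.
  by field; rewrite !gt_eqF.
have E2 : d%:R / (s * p ^+ 2) * ln (C * g) * q = ln t.
  rewrite /t ln_powR /e qE /ps /pstar; field.
  by rewrite !gt_eqF // ?ltr0n // mulr_gt0 // exprn_gt0.
rewrite E1 ler_pdivrMr // E2; lra.
Qed.
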